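(* Assume the setup in the context, with the fine-tuning regime and local smoothness with radius $r\ge 2\sqrt{C}$. Let $0<\epsilon\le 1$ be such that $|\langle\tau_i,\tau_j\rangle|\le\epsilon\|\tau_i\|\|\tau_j\|$ for all $i\neq j$. Fix $i\in[T]$ and $\alpha_i\in[0,1]$, and let $\theta_{\mathrm{Neg},i}=\theta_0-\alpha_i\tau_i$. Then for every $j\in[T]$ with $j\neq i$, $$\mathcal{L}_j(\theta_{\mathrm{Neg},i})-\mathcal{L}_j(\theta_0)\le L_jC\Big(\frac{3}{2}+\epsilon\Big).$$
   Context: Setup: $\theta_0\in\mathbb{R}^d$ is a pretrained parameter vector; $\theta_1,\dots,\theta_T\in\mathbb{R}^d$ are fine-tuned parameters and $\tau_i:=\theta_i-\theta_0$ are task vectors. For each task $i$, $\mathcal{L}_i:\mathbb{R}^d\to\mathbb{R}$ is a differentiable loss (population risk). Norms are Euclidean. Fine-tuning regime: $\nabla\mathcal{L}_i(\theta_i)=0$ for all $i\in[T]$, and there is $C>0$ with $\|\tau_i\|^2\le C$ for all $i$. Local smoothness with radius $r>0$: for each $i$ there is $L_i\ge 0$ such that for all $\theta$ with $\|\theta-\theta_i\|\le r$, $\big|\mathcal{L}_i(\theta)-\mathcal{L}_i(\theta_i)-\langle\theta-\theta_i,\nabla\mathcal{L}_i(\theta_i)\rangle\big|\le\frac{L_i}{2}\|\theta-\theta_i\|^2$. *)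

(* Defs.v *)
From HB Require Import structures.
From mathcomp Require Import all_boot all_order all_algebra.
From mathcomp Require Import all_classical all_reals all_analysis.
Set Implicit Arguments. Unset Strict Implicit. Unset Printing Implicit Defensive.
Import Order.TTheory GRing.Theory Num.Theory.
Import numFieldNormedType.Exports.
Local Open Scope ring_scope.

Definition dotv {R : realType} {d : nat} (u v : 'rV[R]_d) : R :=
  \sum_(k < d) u ord0 k * v ord0 k.
Definition enorm {R : realType} {d : nat} (u : 'rV[R]_d) : R :=
  Num.sqrt (dotv u u).

(* Main.v *)
Require Import Defs.
From HB Require Import structures.
From mathcomp Require Import all_boot all_order all_algebra.
From mathcomp Require Import all_classical all_reals all_analysis.
From mathcomp Require Import ring lra.
Import Order.TTheory GRing.Theory Num.Theory.
Import numFieldNormedType.Exports.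
Local Open Scope ring_scope.

Lemma dotv_ge0 {R : realType} {d : nat} (u : 'rV[R]_d) : 0 <= dotv u u.
Proof. by rewrite /dotv; apply: sumr_ge0 => k _; rewrite -expr2 sqr_ge0. Qed.

Lemma enorm_ge0 {R : realType} {d : nat} (u : 'rV[R]_d) : 0 <= enorm u.
Proof. exact: sqrtr_ge0. Qed.

Lemma enorm_sq {R : realType} {d : nat} (u : 'rV[R]_d) :
  enorm u ^+ 2 = dotv u u.
Proof. by rewrite /enorm sqr_sqrtr // dotv_ge0. Qed.

Lemma dotv_expand {R : realType} {d : nat} (t0 ti tj : 'rV[R]_d) (a : R) :
  dotv (t0 - a *: (ti - t0) - tj) (t0 - a *: (ti - t0) - tj) =
  a ^+ 2 * dotv (ti - t0) (ti - t0) + 2 * a * dotv (ti - t0) (tj - t0)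
  + dotv (tj - t0) (tj - t0).
Proof.
rewrite /dotv !mulr_sumr -!big_split /=; apply: eq_bigr => k _.
rewrite !mxE; ring.
Qed.

Lemma dotv_expand2 {R : realType} {d : nat} (t0 tj : 'rV[R]_d) :
  dotv (t0 - tj) (t0 - tj) = dotv (tj - t0) (tj - t0).
Proof. by rewrite /dotv; apply: eq_bigr => k _; rewrite !mxE; ring. Qed.

Theorem mainTheorem7 (R : realType) (d T : nat)
  (theta0 : 'rV[R]_d) (theta : 'I_T -> 'rV[R]_d)
  (Loss : 'I_T -> 'rV[R]_d -> R) (Lc : 'I_T -> R) (C r eps : R) :
  (forall i x, differentiable (Loss i) x) ->
  (* fine-tuning regime: gradient of L_i vanishes at theta_i *)
  (forall i v, 'd (Loss i) (theta i) v = 0) ->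
  0 < C ->
  (forall i, enorm (theta i - theta0) ^+ 2 <= C) ->
  (* local smoothness with radius r, constants L_i >= 0 *)
  0 < r ->
  (forall i, 0 <= Lc i) ->
  (forall i th, enorm (th - theta i) <= r ->
     `| Loss i th - Loss i (theta i) - 'd (Loss i) (theta i) (th - theta i) |
       <= Lc i / 2 * enorm (th - theta i) ^+ 2) ->
  2 * Num.sqrt C <= r ->
  0 < eps -> eps <= 1 ->
  (forall i j, i != j ->
     `| dotv (theta i - theta0) (theta j - theta0) |
       <= eps * enorm (theta i - theta0) * enorm (theta j - theta0)) ->
  forall (i : 'I_T) (alpha : R), 0 <= alpha -> alpha <= 1 ->
  forall j : 'I_T, j != i ->
    Loss j (theta0 - alpha *: (theta i - theta0)) - Loss j theta0
      <= Lc j * C * (3 / 2 + eps).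
Proof.
move=> _ Hd HC Hn Hr HL Hs HrC He0 He1 Hip i a Ha0 Ha1 j Hji.
have Hij : i != j by rewrite eq_sym.
set u := theta i - theta0; set v := theta j - theta0.
have Hu := Hn i; have Hv := Hn j.
have eu0 := enorm_ge0 u; have ev0 := enorm_ge0 v.
have HW := Hip i j Hij; rewrite -/u -/v in HW.
have HW2 := ler_norm (dotv u v).
have HW3 := ler_normr (dotv u v).
have Heuv : enorm u * enorm v <= C by nra.
have Hsq : (2 * Num.sqrt C) ^+ 2 = 4 * C.
  by rewrite exprMn sqr_sqrtr ?ltW //; ring.
have Hr2 : 4 * C <= r ^+ 2.
  rewrite -Hsq; have := sqrtr_ge0 C; nra.
have le_r : forall x, 0 <= x -> x ^+ 2 <= r ^+ 2 -> x <= r.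
  move=> x x0 hx; rewrite leNgt; apply/negP => hlt; nra.
set th := theta0 - a *: u.
have Eth : enorm (th - theta j) ^+ 2 =
  a ^+ 2 * enorm u ^+ 2 + 2 * a * dotv u v + enorm v ^+ 2.
  by rewrite !enorm_sq /th /u /v dotv_expand.
have Hdot : dotv u v <= eps * C.
  have : eps * (enorm u * enorm v) <= eps * C by rewrite ler_pM2l.
  have : `|dotv u v| <= eps * enorm u * enorm v by [].
  move=> h1 h2; have := ler_norm (dotv u v); lra.
have Hau : a ^+ 2 * enorm u ^+ 2 <= C.
  have : a ^+ 2 <= 1 by rewrite expr2; nra.
  have := sqr_ge0 (enorm u); nra.
have Hadot : 2 * a * dotv u v <= 2 * eps * C.
  have : `|dotv u v| <= eps * C.
    have : eps * (enorm u * enorm v) <= eps * C by rewrite ler_pM2l.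
    lra.
  move=> h; have h' := ler_norm (dotv u v).
  have : a * dotv u v <= eps * C.
    have : a * dotv u v <= a * `|dotv u v| by rewrite ler_wpM2l.
    have : a * `|dotv u v| <= 1 * `|dotv u v| by rewrite ler_wpM2r.
    lra.
  lra.
have Eb : enorm (th - theta j) ^+ 2 <= 2 * C + 2 * eps * C by lra.
have HeC : eps * C <= C by nra.
have Hth := Hs j th (le_r _ (enorm_ge0 _) ltac:(lra)).
rewrite Hd subr0 in Hth.
have E0 : enorm (theta0 - theta j) ^+ 2 = enorm v ^+ 2.
  by rewrite !enorm_sq /v dotv_expand2.
have H0 := Hs j theta0 (le_r _ (enorm_ge0 _) ltac:(lra)).
rewrite Hd subr0 E0 in H0.
have HLj := HL j.
have A1 := ler_norm (Loss j th - Loss j (theta j)).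
have A2 := ler_norm (Loss j theta0 - Loss j (theta j)).
have A3 : - (Loss j theta0 - Loss j (theta j)) <= `|Loss j theta0 - Loss j (theta j)|.
  by rewrite -normrN ler_norm.
have B1 : Lc j / 2 * enorm (th - theta j) ^+ 2 <= Lc j / 2 * (2 * C + 2 * eps * C).
  by rewrite ler_wpM2l // divr_ge0.
have B2 : Lc j / 2 * enorm v ^+ 2 <= Lc j / 2 * C.
  by rewrite ler_wpM2l // divr_ge0.
have -> : Lc j * C * (3 / 2 + eps) =
  Lc j / 2 * (2 * C + 2 * eps * C) + Lc j / 2 * C by field.
lra.
Qed.
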